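(* Let $(D,D_{t'})$ be a proper pair (in the sense allowing contemporaneous effects) and let $A,C\subseteq V\cup W$ and $B\subseteq V$ be pairwise disjoint. Let $E\subseteq V$ be a tail ancestral set such that $\mathrm{de}_\bullet(B)\cap E=\emptyset$, $E\subseteq C$ and $\mathrm{pa}_\bullet(B)\subseteq E$. If $B$ is $\delta$-separated from $A$ given $C$ in $D$, then for every $0<t\le t'$, $\nu_t^B$ is $d$-separated from $\bar\nu_{t-1}^A$ given $\bar\nu_{t-1}^{B\cup C}\cup\nu_t^E$ in $D_{t'}$.
   Context: $V$, $W$ are finite disjoint sets ($W$ = baseline nodes). Tailed directed graph: graph on $V\cup W$ with directed edges $i\to j$ and tailed directed edges $i\bullet\!\!\to j$; $i\ast\!\!\to j$ means $i\to j$ or $i\bullet\!\!\to j$. Only baseline nodes have edges into baseline nodes, and these are tailed. $D^-$ is the DG with $i\to j$ iff $i\ast\!\!\to j$ in $D$. $\mathrm{de}_\bullet(B)$: nodes $k$ reachable by a directed path of tailed edges only starting in $B$; $\mathrm{pa}_\bullet(B)$: nodes $k$ with $k\bullet\!\!\to j$, $j\in B$; these sets exclude $B$. A set $E\subseteq V$ is tail ancestral if there are no $i\in V\setminus E$, $j\in E$ with $i\bullet\!\!\to j$. DG terminology: path = walk without repeated nodes; collider = non-endpoint node with both adjacent edges pointing into it; $\mathrm{an}(C)$ = nodes with a directed path into $C$. $\delta$-separation in a DG $G$: with $G^B$ obtained by deleting all edges $i\to j$ with $i\in B$, $B$ is $\delta$-separated from $A$ given $C$ if every path in $G^B$ between $A$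 and $B$ contains a noncollider in $C$ or a collider not in $\mathrm{an}_G(C)\cup C$. In a tailed directed graph $D$, $\delta$-separation means $\delta$-separation in $D^-$. $d$-separation in a DAG: same blocking condition on paths of the DAG, with no edge deletion. Unrolling: the unrolled version of $D$ on $t'$ lags is the DAG $D_{t'}$ on nodes $V^{t'}=\bigcup_{i\in V}\{\nu_0^i,\dots,\nu_{t'}^i\}$ and $W^{t'}=\{\nu_0^i:i\in W\}$, with $\nu_s^i\to\nu_t^j$ if $s<t$ and $i\ast\!\!\to j$, and $\nu_t^i\to\nu_t^j$ if $i\bullet\!\!\to j$. Rolling: the rolled version of a DAG $D_{t'}$ on such a node set is the tailed directed graph with $i\ast\!\!\to j$ if $\nu_s^i\to\nu_t^j$ for some $s\le t$, and $i\bullet\!\!\to j$ iff $\nu_t^i\to\nu_t^j$ for some $t$. Standing assumption: if $\nu_t^i\to\nu_t^j$ is present then so is $\nu_s^i\to\nu_u^j$ for some $s<u$. $(D,D_{t'})$ is proper if $D$ is the rolled version of $D_{t'}$ or $D_{t'}$ is the unrolled version of $D$. Notation: $\nu_t^A=\{\nu_t^i:i\in A\}$, $\bar\nu_t^A=\{\nu_s^i:i\in A, s\le t\}$ (for baseline $i$, only $\nu_0^i$). *)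

(* Defs.v *)
From mathcomp Require Import all_boot.
Set Implicit Arguments. Unset Strict Implicit. Unset Printing Implicit Defensive.

Section Paths.
Variable T : eqType.

Definition step_ok (g : rel T) (x : T) (st : bool * T) : bool :=
  if st.1 then g x st.2 else g st.2 x.

Fixpoint walk (g : rel T) (x : T) (s : seq (bool * T)) : bool :=
  match s with
  | [::] => true
  | st :: s' => step_ok g x st && walk g st.2 s'
  end.

Definition wnodes (x : T) (s : seq (bool * T)) : seq T := x :: map snd s.

Definition is_path (g : rel T) (x : T) (s : seq (bool * T)) : bool :=
  walk g x s && uniq (wnodes x s).

Definition wlast (x : T) (s : seq (bool * T)) : T := last x (map snd s).

(* For 0 < k < size s, the k-th node of the path (wnodes x s)`_k is internal;
   its incoming edge is step k-1 and its outgoing edge is step k.  It is a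
   collider iff both adjacent edges point into it: step k-1 is forward
   (prev -> node) and step k is backward (next -> node). *)
Definition collider_at (x : T) (s : seq (bool * T)) (k : nat) : bool :=
  (nth (true, x) s k.-1).1 && ~~ (nth (true, x) s k).1.

(* ancestors: nodes with a directed path into C (length 0 allowed; the
   definitions below always use an(C) together with C, so this is harmless) *)
Definition anc (g : rel T) (C : pred T) (v : T) : Prop :=
  exists p : seq T, path g v p /\ last v p \in C.

Definition blocked (gan : rel T) (C : pred T) (x : T) (s : seq (bool * T)) : Prop :=
  exists k, 0 < k < size s /\
    let v := nth x (wnodes x s) k in
    if collider_at x s k then ~ (v \in C \/ anc gan C v)
    else v \in C.

Definition sep_gen (gpath gan : rel T) (A B C : pred T) : Prop :=
  forall (x : T) (s : seq (bool * T)), is_path gpath x s ->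
    (x \in A /\ wlast x s \in B) \/ (x \in B /\ wlast x s \in A) ->
    blocked gan C x s.

Definition dsep (g : rel T) (A B C : pred T) : Prop := sep_gen g g A B C.

Definition deltasep (g : rel T) (A B C : pred T) : Prop :=
  sep_gen [rel i j | g i j && (i \notin B)] g A B C.
End Paths.

(* ---------- Tailed directed graphs ----------
   Nodes: a finType N = V ∪ W, with W : {set N} the baseline nodes and
   V = ~: W.  A tailed directed graph is given by two relations:
     star i j  <->  i *-> j   (i -> j or i •-> j)
     tail i j  <->  i •-> j
   with tail ⊆ star; an edge i *-> j with ~~ tail i j is a plain i -> j.
   So D^- is exactly the DG [rel i j | star i j]. *)
Section Tailed.
Variable N : finType.
Variable W : {set N}.

Definition tailed_graph (star tail : rel N) : Prop :=
  (forall i j, tail i j -> star i j) /\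
  (forall i j, j \in W -> star i j -> (i \in W) && tail i j).

Definition tde (tail : rel N) (B : {set N}) (k : N) : Prop :=
  k \notin B /\ exists2 b, b \in B & exists p : seq N, path tail b p /\ last b p = k.

Definition tpa (tail : rel N) (B : {set N}) (k : N) : Prop :=
  k \notin B /\ exists2 j, j \in B & tail k j.

Definition tail_ancestral (tail : rel N) (E : {set N}) : Prop :=
  E \subset ~: W /\
  forall i j, i \in ~: W -> i \notin E -> j \in E -> ~~ tail i j.

(* ---------- Time-unrolled graphs ----------
   The node nu_t^i is represented by (i, t) : N * nat.  The node set of
   D_{t'} is V^{t'} ∪ W^{t'}, i.e. the pairs satisfying [valid]. *)
Definition valid (t' : nat) (x : N * nat) : bool :=
  (x.2 <= t') && ((x.1 \in W) ==> (x.2 == 0)).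

Definition unrolled (star tail : rel N) (t' : nat) : rel (N * nat) :=
  fun x y => [&& valid t' x, valid t' y &
    ((x.2 < y.2) && star x.1 y.1) || ((x.2 == y.2) && tail x.1 y.1)].

Definition is_dag_on (t' : nat) (G : rel (N * nat)) : Prop :=
  (forall x y, G x y -> [&& valid t' x, valid t' y & x.2 <= y.2]) /\
  (forall x p, path G x p -> last x p = x -> p = [::]).

Definition standing (G : rel (N * nat)) : Prop :=
  forall i j t, G (i, t) (j, t) -> exists s u, s < u /\ G (i, s) (j, u).

Definition rolled_of (G : rel (N * nat)) (star tail : rel N) : Prop :=
  (forall i j, star i j <-> exists s t, s <= t /\ G (i, s) (j, t)) /\
  (forall i j, tail i j <-> exists t, G (i, t) (j, t)).

Definition proper_pair (star tail : rel N) (t' : nat) (G : rel (N * nat)) : Prop :=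
  tailed_graph star tail /\ is_dag_on t' G /\
  ((standing G /\ rolled_of G star tail) \/ G =2 unrolled star tail t').

Definition nu (A : {set N}) (t : nat) : pred (N * nat) :=
  [pred x | (x.1 \in A) && (x.2 == t)].
Definition nubar (t' : nat) (A : {set N}) (t : nat) : pred (N * nat) :=
  [pred x | [&& x.1 \in A, x.2 <= t & valid t' x]].
End Tailed.

(* Main.v *)
Require Import Defs.
From mathcomp Require Import all_boot zify.
From Stdlib Require Import Classical.
Set Implicit Arguments. Unset Strict Implicit. Unset Printing Implicit Defensive.

Section Idx.
Variable T : eqType.

Definition iwalk (g : rel T) m (f : nat -> T) (d : nat -> bool) : Prop :=
  forall i, i < m -> if d i then g (f i) (f i.+1) else g (f i.+1) (f i).

Definition iconn (Pc Pn : T -> Prop) m (f : nat -> T) (d : nat -> bool) : Prop :=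
  forall k, 0 < k < m -> if d k.-1 && ~~ d k then Pc (f k) else Pn (f k).

Lemma walkP g x s x0 b0 : walk g x s <->
  iwalk g (size s) (fun i => nth x0 (wnodes x s) i) (fun i => (nth (b0,x0) s i).1).
Proof.
elim: s x => [|[b y] s IH] x /=.
  by split => // _ i; rewrite ltn0.
rewrite /step_ok /=; split.
  case/andP=> h1 /(IH y) h2 [|i] /=; first by [].
  by rewrite ltnS => /h2.
move=> h; apply/andP; split; first exact: (h 0).
by apply/(IH y) => i hi; apply: (h i.+1).
Qed.

Lemma wlastE (x : T) s x0 : wlast x s = nth x0 (wnodes x s) (size s).
Proof.
rewrite /wlast /wnodes; elim: s x => [|[b y] s IH] x //=.
Qed.

Lemma iwalk_ext g m f d f' d' : (forall i, i <= m -> f i = f' i) ->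
  (forall i, i < m -> d i = d' i) -> iwalk g m f d -> iwalk g m f' d'.
Proof.
move=> hf hd h i hi; rewrite -hd // -hf ?(ltnW hi) // -hf //.
exact: h.
Qed.

Lemma iconn_ext Pc Pn m f d f' d' : (forall i, i <= m -> f i = f' i) ->
  (forall i, i < m -> d i = d' i) -> iconn Pc Pn m f d -> iconn Pc Pn m f' d'.
Proof.
move=> hf hd h k /andP[k0 km].
have k1 : k.-1 < m by rewrite (leq_ltn_trans (leq_pred k) km).
rewrite -(hd _ k1) -(hd _ km) -(hf _ (ltnW km)); apply: h; by rewrite k0 km.
Qed.

Lemma blocked_iconn gan (C : pred T) x s :
  ~ blocked gan C x s <->
  iconn (fun v => v \in C \/ anc gan C v) (fun v => v \notin C) (size s)
     (fun i => nth x (wnodes x s) i) (fun i => (nth (true,x) s i).1).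
Proof.
split.
  move=> nb k hk; case: ifP => hc.
    apply: NNPP => hn; apply: nb; exists k; split => //=.
    by rewrite /collider_at hc.
  apply/negP => hin; apply: nb; exists k; split => //=.
  by rewrite /collider_at hc.
move=> h [k [hk]] /=; move: (h k hk); rewrite /collider_at.
by case: ifP => _ // /negP.
Qed.

Lemma iwalk_rev g m f d : iwalk g m f d ->
  iwalk g m (fun i => f (m - i)) (fun i => ~~ d (m - i.+1)).
Proof.
move=> h i hi; have hh : m - i.+1 < m by rewrite ltn_subrL (leq_ltn_trans (leq0n _) hi).
have := h (m - i.+1) hh.
have e : (m - i.+1).+1 = m - i by rewrite subnSK.
by rewrite e; case: (d _).
Qed.

Lemma iconn_rev Pc Pn m f d : iconn Pc Pn m f d ->
  iconn Pc Pn m (fun i => f (m - i)) (fun i => ~~ d (m - i.+1)).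
Proof.
move=> h k /andP[k0 km].
have hk : 0 < m - k < m by rewrite subn_gt0 km /= ltn_subrL k0 (ltn_trans k0 km).
move: (h _ hk).
have e1 : (m - k).-1 = m - k.+1 by rewrite subnS.
have e2 : m - k.-1.+1 = m - k by rewrite prednK.
by rewrite e1 e2 negbK andbC.
Qed.

End Idx.

Lemma chaseR (d : nat -> bool) j k : k < j -> d k ->
  (forall i, k <= i < j -> d i) \/
  exists r, [/\ k < r < j, ~~ d r & forall i, k <= i < r -> d i].
Proof.
elim: j => [//|j IH] kj1 dk; move: kj1; rewrite ltnS leq_eqVlt => /orP[/eqP e | kj].
  subst; by left => i; rewrite ltnS -eqn_leq => /eqP <-.
case: (IH kj dk) => [h|[r [hr dr hh]]].
  case dj: (d j).
    left => i /andP[ki]; rewrite ltnS leq_eqVlt => /orP[/eqP -> //|ij]; apply: h; by rewrite ki.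
  right; exists j; split; [by rewrite kj ltnSn | by rewrite dj | by move=> i hi; apply: h].
right; exists r; split => //; case/andP: hr => -> /= h; exact: ltnW.
Qed.

Lemma chaseL (d : nat -> bool) k : 0 < k -> ~~ d k.-1 ->
  (forall l, l < k -> ~~ d l) \/
  exists i, [/\ 0 < i < k, d i.-1 & forall l, i <= l < k -> ~~ d l].
Proof.
elim: k => // k IH _ dk.
case: k IH dk => [|k] IH dk.
  by left => l; rewrite ltnS leqn0 => /eqP ->.
case dk1: (d k).
  right; exists k.+1; split => //; first by rewrite ltnSn.
  by move=> l; rewrite ltnS -eqn_leq => /eqP <-.
case: (IH isT (negbT dk1)) => [h|[i [hi di hh]]].
  left => l; rewrite ltnS leq_eqVlt => /orP[/eqP -> //|]; exact: h.
right; exists i; split => //.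
  by case/andP: hi => -> /= h; exact: ltnW.
move=> l /andP[il]; rewrite ltnS leq_eqVlt => /orP[/eqP -> //|]; move=> lk; apply: hh; rewrite il.
exact: lk.
Qed.

Section Splice.
Variable T : eqType.
Variables (gpath gan : rel T) (C : pred T).
Hypothesis sub : forall x y, gpath x y -> gan x y.

Definition Pc := fun v => v \in C \/ anc gan C v.
Definition Pn := fun v : T => v \notin C.

Lemma anc_step x y : gan x y -> Pc y -> Pc x.
Proof.
move=> e [yC|[p [hp hl]]]; right.
  by exists [:: y]; rewrite /= e yC.
by exists (y :: p); rewrite /= e hp.
Qed.

Lemma anc_chain (f : nat -> T) a r : a <= r ->
  (forall i, a <= i < r -> gan (f i) (f i.+1)) -> Pc (f r) -> Pc (f a).
Proof.
move=> ar; have [n ->] : exists n, r = a + n by exists (r - a); lia.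
elim: n a {ar} => [|n IH] a; first by rewrite addn0.
move=> h hr; apply: (anc_step (h a _)); first lia.
apply: IH; last by rewrite addSnnS.
move=> i hi; apply: h; lia.
Qed.

Lemma splice m f d a b : a < b <= m -> f a = f b ->
  iwalk gpath m f d -> iconn Pc Pn m f d ->
  let f' := fun i => if i <= a then f i else f (i + (b - a)) in
  let d' := fun i => if i < a then d i else d (i + (b - a)) in
  [/\ iwalk gpath (m - (b - a)) f' d', iconn Pc Pn (m - (b - a)) f' d',
      f' 0 = f 0 & f' (m - (b - a)) = f m].
Proof.
move=> /andP[ab bm] fab hw hc f' d'.
have f'E : forall i, a <= i -> f' i = f (i + (b - a)).
  move=> i ai; rewrite /f'; case: ifP => // ia.
  have -> : i = a by lia.
  by rewrite fab; congr f; lia.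
split.
- move=> i hi; rewrite /d'; have [ia|ai] := ltnP i a.
    have := hw i ltac:(lia).
    by rewrite /f' (ltnW ia) ia.
  rewrite !f'E; try lia.
  have := hw (i + (b - a)) ltac:(lia).
  by rewrite addSn.
- move=> k hk; case: (ltngtP k a) => ka.
  + have := hc k ltac:(lia).
    have -> : d' k.-1 = d k.-1 by rewrite /d' ifT //; lia.
    have -> : d' k = d k by rewrite /d' ifT //; lia.
    by have -> : f' k = f k by rewrite /f' ifT //; lia.
  + have := hc (k + (b - a)) ltac:(lia).
    rewrite f'E ?(ltnW ka) //.
    have -> : d' k.-1 = d (k + (b - a)).-1.
      rewrite /d' ifF; last lia. congr d; lia.
    by have -> : d' k = d (k + (b - a)) by rewrite /d' ifF //; lia.
  + subst k.
    have -> : d' a.-1 = d a.-1 by rewrite /d' ifT //; lia.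
    have -> : d' a = d b by rewrite /d' ifF; [congr d; lia | lia].
    rewrite /f' leqnn.
    have ha := hc a ltac:(lia).
    have hb := hc b ltac:(lia).
    case: (boolP (f a \in C)) => fC.
      case da: (d a.-1); last by move: ha; rewrite da /Pn fC.
      case db: (d b); first by move: hb; rewrite db andbF /Pn -fab fC.
      by left.
    case: ifP => // /andP[da db].
    case daa: (d a); last by move: ha; rewrite da daa.
    case dbb: (d b.-1); first by move: hb; rewrite dbb db -fab.
    case: (chaseR ab daa) => [hall|[r [hr dr hall]]].
      by move: (hall b.-1 ltac:(lia)); rewrite dbb.
    have hr' := hc r ltac:(lia).
    move: hr'; rewrite dr (hall r.-1 ltac:(lia)) /= => Pr.
    apply: (anc_chain (f := f) (a := a) (r := r)) => //; first lia.
    move=> i hi; apply: sub; have := hw i ltac:(lia); by rewrite hall.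
- by rewrite /f' leq0n.
- rewrite f'E; last lia. by congr f; lia.
Qed.
End Splice.

Lemma no_conn_walk (T : eqType) (gpath gan : rel T) (A B C : pred T) :
  (forall x y, gpath x y -> gan x y) -> sep_gen gpath gan A B C ->
  forall m f d, iwalk gpath m f d -> f 0 \in A -> f m \in B ->
  iconn (Pc gan C) (Pn C) m f d -> False.
Proof.
move=> sub hsep m; elim/ltn_ind: m => m IH f d hw h0 hm hc.
case: (boolP (uniq (mkseq f m.+1))) => hu.
  pose x := f 0; pose s := mkseq (fun i => (d i, f i.+1)) m.
  have ss : size s = m by rewrite size_mkseq.
  have nthW : forall i, i <= m -> nth x (wnodes x s) i = f i.
    case => [|i] hi //=.
    rewrite (nth_map (true, x)); last by rewrite ss.
    by rewrite nth_mkseq.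
  have nthD : forall i, i < m -> (nth (true,x) s i).1 = d i.
    by move=> i hi; rewrite nth_mkseq.
  have hp : is_path gpath x s.
    apply/andP; split.
      apply/(walkP _ _ _ x true); rewrite ss.
      apply: iwalk_ext hw => i hi; [by rewrite nthW | by rewrite nthD].
    have -> : wnodes x s = mkseq f m.+1 => //.
    apply: (eq_from_nth (x0:=x)); first by rewrite size_mkseq /= size_map ss.
    move=> i; rewrite /= size_map ss => hi; rewrite nthW // nth_mkseq //.
  have := hsep x s hp (or_introl (conj h0 _)).
  rewrite (wlastE _ _ x) ss nthW // => /(_ hm).
  apply/blocked_iconn; rewrite ss.
  apply: iconn_ext hc => i hi; [by rewrite nthW | by rewrite nthD].
case/(uniqPn (f 0)): hu => i [j []]; rewrite size_mkseq => ij jm.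
rewrite !nth_mkseq ?(ltn_trans ij jm) // => fij.
have /andP[ij' jm'] : i < j <= m by rewrite ij -ltnS jm.
have [hw' hc' e0 em] := splice sub (ltac:(by rewrite ij' jm') : i < j <= m) fij hw hc.
apply: (IH (m - (j - i)) ltac:(lia) _ _ hw' _ _ hc'); [by rewrite e0 | by rewrite em].
Qed.

Lemma ex_min (P : nat -> Prop) : (exists k, P k) -> exists k, P k /\ forall i, i < k -> ~ P i.
Proof.
case=> k; elim/ltn_ind: k => k IH hk.
case: (classic (exists i, i < k /\ P i)) => [[i [ik hi]]|hn].
  exact: IH hi.
exists k; split => // i ik hi; apply: hn; by exists i.
Qed.

Lemma nth_last_cons (T : Type) (x0 v : T) q : nth x0 (v :: q) (size q) = last v q.
Proof. by elim: q v => //= y q IH v; rewrite -IH. Qed.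

Section Trunc.
Variable T : eqType.
Variables (star : rel T) (B C : pred T).
Let X := [predU B & C].
Let gp := [rel i j | star i j && (i \notin B)].

Lemma first_hit v p : path star v p -> last v p \in X ->
  exists q, [/\ path star v q, last v q \in X &
              forall j, j < size q -> nth v (v :: q) j \notin X].
Proof.
elim: p v => [|y p IH] v /=.
  by move=> _ hv; exists [::]; split.
case/andP=> e hp hl.
case: (boolP (v \in X)) => hv.
  by exists [::]; split.
case: (IH y hp hl) => q [hq hlq hn].
exists (y :: q); split => //=; first by rewrite e.
case=> [|j] /= hj; first by [].
have hj' : j < size q by [].
rewrite (set_nth_default y); last by rewrite /= ltnS ltnW.
exact: hn hj'.
Qed.

Definition Pcx (v : T) := v \in B \/ v \in C \/ anc star X v.

Lemma trunc m f d : iwalk gp m f d -> f m \in B ->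
  iconn Pcx (Pn C) m f d ->
  exists m' f' d', [/\ iwalk gp m' f' d', f' 0 = f 0, f' m' \in B &
                    iconn (Pc star C) (Pn C) m' f' d'].
Proof.
move=> hw hm hc.
case: (classic (exists k, 0 < k < m /\ d k.-1 && ~~ d k /\ ~ Pc star C (f k))) => [hb|hnb];
  last first.
  exists m, f, d; split => // k hk; move: (hc k hk); case: ifP => // hcol _.
  by apply: NNPP => hn; apply: hnb; exists k.
case: (ex_min hb) => k [[hk [hcol hnpc]] hmin].
pose v := f k.
have hv : exists p, path star v p /\ last v p \in X.
  move: (hc k hk); rewrite hcol => -[vB|[vC|[p [hp hl]]]].
  - by exists [::]; split => //=; rewrite inE /= vB.
  - by exfalso; apply: hnpc; left.
  - by exists p.
case: hv => p [hp hl].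
case: (first_hit hp hl) => q [hq hlq hn].
have hlB : last v q \in B.
  move: hlq; rewrite inE /= => /orP[] // hlC; exfalso; apply: hnpc.
  case: q hq hlC hn => [|y q] hq hlC hn; first by left.
  by right; exists (y :: q).
have nX : forall j, j < size q -> nth v (v :: q) j \notin B /\ nth v (v :: q) j \notin C.
  by move=> j /hn; rewrite inE /= negb_or => /andP[].
pose f' := fun i => if i < k then f i else nth v (v :: q) (i - k).
pose d' := fun i => if i < k then d i else true.
have f'S : forall i, i < k -> f' i.+1 = f i.+1.
  move=> i ik; rewrite /f'; case: ifP => // h.
  have -> : i.+1 = k by lia.
  by rewrite subnn.
exists (k + size q), f', d'; split.
- case/andP: hk => k0 km.
  move=> i hi; rewrite /d'; case: (ltnP i k) => ik.
    rewrite f'S //; have := hw i ltac:(lia); by rewrite /f' ik.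
  have ik' : (i < k) = false by lia.
  rewrite /= /f' ik'.
  have -> : (i.+1 < k) = false by lia.
  have -> : i.+1 - k = (i - k).+1 by lia.
  move/pathP: hq => /(_ v (i - k) ltac:(lia)) -> /=.
  by case: (nX (i - k) ltac:(lia)).
- by rewrite /f' ifT //; case/andP: hk.
- rewrite /f' ifF; last lia.
  by rewrite addKn nth_last_cons.
- move=> i hi; rewrite /d' /f'.
  case: (ltngtP i k) => ik.
  + have -> : i.-1 < k by lia.
    move: (hc i ltac:(lia)); case: ifP => hci.
      move=> _; apply: NNPP => hn0; apply: (hmin i ik); split => //; lia.
    done.
  + have -> : (i.-1 < k) = false by lia.
    rewrite /Pn /=; by case: (nX (i - k) ltac:(lia)).
  + subst i.
    have -> : k.-1 < k by lia.
    rewrite andbF subnn /Pn /=.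
    by case: (nX 0 ltac:(lia)).
Qed.
End Trunc.

Section Main.
Variables (N : finType) (W : {set N}) (star tail : rel N) (t' : nat) (G : rel (N * nat)).
Variables (A B C E : {set N}).
Hypothesis HG : forall x y, G x y -> [/\ valid W t' x, valid W t' y &
   (x.2 < y.2 /\ star x.1 y.1) \/ (x.2 = y.2 /\ tail x.1 y.1)].
Hypothesis tailstar : forall i j, tail i j -> star i j.
Hypothesis hAB : [disjoint A & B].
Hypothesis hTA : tail_ancestral W tail E.
Hypothesis htde : forall k, tde tail B k -> k \notin E.
Hypothesis hEC : E \subset C.
Hypothesis htpa : forall k, tpa tail B k -> k \in E.
Variable t : nat.
Hypothesis t0 : 0 < t.
Hypothesis tt' : t <= t'.

Let Z := [predU nubar W t' (B :|: C) t.-1 & nu E t].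

Lemma G1 x y : G x y -> x.2 <= y.2.
Proof. by case/HG => _ _ [[/ltnW]|[->]]. Qed.

Lemma G2 x y : G x y -> star x.1 y.1.
Proof. by case/HG => _ _ [[]|[_ /tailstar]]. Qed.

Lemma G3 x y : G x y -> x.2 = y.2 -> tail x.1 y.1.
Proof. by case/HG => _ _ [[h _ e]|[]]; first by rewrite e ltnn in h. Qed.

Lemma Vnw x : valid W t' x -> 0 < x.2 -> x.1 \notin W.
Proof.
case/andP=> _ /implyP h x0; apply/negP => /h /eqP e; by rewrite e in x0.
Qed.

Lemma Zt z : z \in Z -> z.2 <= t /\ (z.2 = t -> z.1 \in E).
Proof.
rewrite !inE => /orP[/and3P[_ h _]|/andP[h /eqP e]].
  split; first lia. move=> e; lia.
by split; [rewrite e | ].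
Qed.

Lemma ZBC z : z \in Z -> z.1 \in B \/ z.1 \in C.
Proof.
rewrite !inE => /orP[/and3P[/orP[h|h] _ _]|/andP[h _]]; [by left|by right|].
by right; apply: (subsetP hEC).
Qed.

Lemma notZ x : valid W t' x -> x \notin Z -> x.2 <= t.-1 -> x.1 \notin B /\ x.1 \notin C.
Proof.
move=> v; rewrite !inE negb_or => /andP[h _] ht.
move: h; rewrite ht v !andbT negb_or => /andP[-> ->]; by [].
Qed.

Lemma inZ x : x.1 \in E -> x.2 = t -> x \in Z.
Proof. by move=> h e; rewrite !inE h e eqxx orbT. Qed.

Lemma pathmono x p : path G x p -> x.2 <= (last x p).2.
Proof.
elim: p x => //= y p IH x /andP[e hp].
exact: leq_trans (G1 e) (IH _ hp).
Qed.

Lemma TAstep i j : i \notin W -> tail i j -> j \in E -> i \in E.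
Proof.
move=> iW e jE; apply: NNPP => /negP iE.
case: hTA => _ /(_ i j) h; move: (h ltac:(by rewrite inE) iE jE).
by rewrite e.
Qed.

Lemma TAp x p : path G x p -> x.2 = t -> (last x p).2 <= t -> (last x p).1 \in E -> x.1 \in E.
Proof.
elim: p x => //= y p IH x /andP[e hp] xt hl hE.
have yt : y.2 = t.
  have := G1 e; have := pathmono hp; lia.
have yE := IH y hp yt hl hE.
case/HG: (e) => vx _ _.
apply: (TAstep (Vnw vx ltac:(lia)) (G3 e ltac:(lia)) yE).
Qed.

Lemma F1 v : Pc G Z v -> v.2 <= t /\ (v.2 = t -> v.1 \in E).
Proof.
case=> [hz|[p [hp hl]]]; first exact: Zt hz.
have := pathmono hp; case: (Zt hl) => h1 h2 h3.
split. exact: leq_trans h3 h1.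
move=> vt; apply: (TAp hp vt h1); apply: h2; apply/eqP; rewrite eqn_leq h1 -vt h3 //.
Qed.

Lemma pathproj x p : path G x p -> path star x.1 (map fst p).
Proof. by elim: p x => //= y p IH x /andP[/G2 -> /IH]. Qed.

Lemma lastproj (x : N * nat) p : last x.1 (map fst p) = (last x p).1.
Proof. by elim: p x => //= y p IH x. Qed.

Lemma Fproj v : Pc G Z v -> Pcx star (mem B) (mem C) v.1.
Proof.
case=> [/ZBC [h|h]|[p [hp hl]]]; [by left | by right; left|].
right; right; exists (map fst p); split; first exact: pathproj.
rewrite lastproj inE /=; by case: (ZBC hl) => ->; rewrite ?orbT.
Qed.


Ltac is_arith P := lazymatch P with
  | is_true (leq _ _) => idtac
  | is_true (_ && _) => idtac
  | is_true (~~ _) => idtac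
  | @eq _ _ _ => idtac
  | ~ (@eq _ _ _) => idtac
  end.
Ltac keep_arith := repeat match goal with
  | H : ?P |- _ => tryif is_arith P then fail else clear H
  end.
Ltac slia := keep_arith; lia.

Lemma MP m f d : iwalk G m f d -> f 0 \in nubar W t' A t.-1 -> f m \in nu B t ->
  iconn (Pc G Z) (Pn Z) m f d ->
  exists m' f' d', [/\ iwalk [rel i j | star i j && (i \notin mem B)] m' f' d',
     f' 0 \in A, f' m' \in B & iconn (Pcx star (mem B) (mem C)) (Pn (mem C)) m' f' d'].
Proof.
move=> hw h0 hm hc.
pose tm : nat -> nat := fun i => (f i).2.
have tmT : forall i, i < m -> d i -> tm i <= tm i.+1.
  by move=> i im di; move: (hw i im); rewrite di => /G1.
have tmF : forall i, i < m -> ~~ d i -> tm i.+1 <= tm i.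
  by move=> i im di; move: (hw i im); rewrite (negbTE di) => /G1.
have monoT : forall a b, a <= b -> b <= m -> (forall i, a <= i < b -> d i) -> tm a <= tm b.
  move=> a b ab; have [n ->] : exists n, b = a + n by exists (b - a); slia.
  elim: n => [|n IH] hb hall; first by rewrite addn0.
  apply: leq_trans (IH ltac:(slia) ltac:(move=> i hi; apply: hall; slia)) _.
  rewrite addnS; apply: tmT; [slia | apply: hall; slia].
have monoF : forall a b, a <= b -> b <= m -> (forall i, a <= i < b -> ~~ d i) -> tm b <= tm a.
  move=> a b ab; have [n ->] : exists n, b = a + n by exists (b - a); slia.
  elim: n => [|n IH] hb hall; first by rewrite addn0.
  apply: leq_trans _ (IH ltac:(slia) ltac:(move=> i hi; apply: hall; slia)).
  rewrite addnS; apply: tmF; [slia | apply: hall; slia].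
have vl : forall i, i < m -> valid W t' (f i) /\ valid W t' (f i.+1).
  move=> i im; move: (hw i im); case: (d i) => /HG [] //.
move: h0; rewrite inE /= => /and3P[h0A h0t _].
have tm0 : tm 0 < t by rewrite /tm (leq_ltn_trans h0t) // ltn_predL.
case: (ex_min (P := fun k => k <= m /\ f k \in nu B t)) => [|j [[jm hj] hmin]].
  by exists m.
have hQ : forall i, i < j -> f i \notin nu B t.
  move=> i ij; apply/negP => hi; apply: (hmin i ij); split => //; slia.
move: (hj); rewrite inE /= => /andP[hjB /eqP tj].
have tj' : tm j = t by [].
have j0 : 0 < j.
  case: j tj' {hj hmin hQ jm hjB tj} => // tj'; slia.
have hcol : forall k, 0 < k < m -> d k.-1 && ~~ d k -> tm k <= t /\ (tm k = t -> (f k).1 \in E).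
  by move=> k hk hck; move: (hc k hk); rewrite hck => /F1.
have hnc : forall k, 0 < k < m -> ~~ (d k.-1 && ~~ d k) -> f k \notin Z.
  by move=> k hk hck; move: (hc k hk); rewrite (negbTE hck).
have F2 : forall k, k <= j -> tm k <= t.
  elim=> [_|k IH hk]; first slia.
  have tk := IH (ltnW hk).
  case dk: (d k); last first.
    apply: leq_trans (tmF k ltac:(slia) (negbT dk)) tk.
  case: (leqP (tm k.+1) t) => // hgt; exfalso.
  case: (chaseR hk dk) => [hall|[r [hr dr hall]]].
    have := monoT k.+1 j hk jm ltac:(move=> i hi; apply: hall; slia); slia.
  have := monoT k.+1 r ltac:(slia) ltac:(slia) ltac:(move=> i hi; apply: hall; slia).
  have [] := hcol r ltac:(slia).
    by rewrite dr (hall r.-1 ltac:(slia)).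
  move=> ? _; slia.
have F3 : forall k, 0 < k < j -> tm k = t -> d k.-1 && ~~ d k.
  move=> k hk tk; case: (boolP (d k.-1 && ~~ d k)) => // hncol; exfalso.
  have fkZ := hnc k ltac:(slia) hncol.
  move: hncol; rewrite negb_and negbK => /orP[dkm|dk].
    case: (chaseL (k := k) ltac:(slia) dkm) => [hall|[i [hi di hall]]].
      have := monoF 0 k ltac:(slia) ltac:(slia) ltac:(move=> l hl; apply: hall; slia); slia.
    have ti : tm i = t.
      have := monoF i k ltac:(slia) ltac:(slia) ltac:(move=> l hl; apply: hall; slia).
      have := F2 i ltac:(slia); slia.
    have dI : ~~ d i by apply: hall; slia.
    have [_ iE] := hcol i ltac:(slia) ltac:(by rewrite di dI).
    have ti1 : tm i.+1 = t.
      have := monoF i.+1 k ltac:(slia) ltac:(slia) ltac:(move=> l hl; apply: hall; slia).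
      have := tmF i ltac:(slia) dI; slia.
    have e : G (f i.+1) (f i) by move: (hw i ltac:(slia)); rewrite (negbTE dI).
    have [_ v1] := vl i ltac:(slia).
    have i1E := TAstep (Vnw v1 ltac:(rewrite -/(tm i.+1); slia)) (G3 e ltac:(rewrite -/(tm i.+1) -/(tm i); slia)) (iE ti).
    have := hnc i.+1 ltac:(slia) ltac:(by rewrite /= (negbTE dI)).
    by rewrite inZ.
  case: (chaseR (j := j) (k := k) ltac:(slia) dk) => [hall|[r [hr dr hall]]].
    have dj1 : d j.-1 by apply: hall; slia.
    have tj1 : tm j.-1 = t.
      have := monoT k j.-1 ltac:(slia) ltac:(slia) ltac:(move=> l hl; apply: hall; slia).
      have := F2 j.-1 ltac:(slia); slia.
    have e : G (f j.-1) (f j).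
      by move: (hw j.-1 ltac:(slia)); rewrite dj1 prednK.
    have tl := G3 e ltac:(rewrite -/(tm j) -/(tm j.-1); slia).
    have nB : (f j.-1).1 \notin B.
      apply/negP => hb; move: (hQ j.-1 ltac:(slia)); by rewrite inE /= hb -/(tm j.-1) tj1 eqxx.
    have jE := htpa (conj nB (ex_intro2 _ _ (f j).1 hjB tl)).
    have := hnc j.-1 ltac:(slia) ltac:(by rewrite dj1 andbF).
    by rewrite inZ.
  have dr1 : d r.-1 by apply: hall; slia.
  have tr : tm r = t.
    have := monoT k r ltac:(slia) ltac:(slia) ltac:(move=> l hl; apply: hall; slia).
    have [] := hcol r ltac:(slia) ltac:(by rewrite dr1 dr).
    move=> ? _; slia.
  have [_ rE] := hcol r ltac:(slia) ltac:(by rewrite dr1 dr).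
  have tr1 : tm r.-1 = t.
    have := monoT k r.-1 ltac:(slia) ltac:(slia) ltac:(move=> l hl; apply: hall; slia).
    have := monoT r.-1 r ltac:(slia) ltac:(slia) ltac:(move=> l hl; apply: hall; slia).
    slia.
  have e : G (f r.-1) (f r).
    by move: (hw r.-1 ltac:(slia)); rewrite dr1 prednK //; slia.
  have [v1 _] := vl r.-1 ltac:(slia).
  have r1E := TAstep (Vnw v1 ltac:(rewrite -/(tm r.-1); slia)) (G3 e ltac:(rewrite -/(tm r.-1) -/(tm r); slia)) (rE tr).
  have := hnc r.-1 ltac:(slia) ltac:(by rewrite dr1 andbF).
  by rewrite inZ.
have NC : forall i, 0 < i < j -> ~~ (d i.-1 && ~~ d i) -> (f i).1 \notin B /\ (f i).1 \notin C.
  move=> i hi hnci.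
  have [vi _] := vl i ltac:(slia).
  apply: notZ => //; first exact: (hnc i ltac:(slia) hnci).
  have := F2 i ltac:(slia); rewrite -/(tm i).
  case: (ltngtP (tm i) t) => // hti _; first slia.
  by move: hnci; rewrite F3.
exists j, (fun i => (f i).1), d; split.
- move=> i ij; case di: (d i) => /=.
    move: (hw i ltac:(slia)); rewrite di => /G2 ->.
    case: i ij di => [|i] ij di /=; first by rewrite (disjointFr hAB h0A).
    by case: (NC i.+1 ltac:(slia) ltac:(by rewrite /= di andbF)).
  move: (hw i ltac:(slia)); rewrite di => /G2 ->.
  case: (ltngtP i.+1 j) => hij; first by case: (NC i.+1 ltac:(slia) ltac:(by rewrite /= di)).
    slia.
  exfalso.
  have e : G (f j) (f i) by move: (hw i ltac:(slia)); rewrite di hij.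
  have ti : tm i = t.
    have := F2 i ltac:(slia); have := tmF i ltac:(slia) ltac:(by rewrite di).
    rewrite hij; slia.
  have i0 : 0 < i by case: i {e di ij hij} ti; slia.
  have [_ iE] := hcol i ltac:(slia) (F3 i ltac:(slia) ti).
  have tl := G3 e ltac:(rewrite -/(tm j) -/(tm i); slia).
  have nB : (f i).1 \notin B.
    apply/negP => hb; move: (hQ i ltac:(slia)); by rewrite inE /= hb -/(tm i) ti eqxx.
  have hpth : path tail (f j).1 [:: (f i).1] by rewrite /= tl.
  have := htde (conj nB (ex_intro2 _ _ (f j).1 hjB (ex_intro _ [:: (f i).1] (conj hpth erefl)))).
  by rewrite (iE ti).
- by [].
- by [].
- move=> k hk; case: ifP => hck.
    by apply: Fproj; move: (hc k ltac:(slia)); rewrite hck.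
  by case: (NC k hk (negbT hck)).
Qed.

End Main.

Theorem lemma1 (N : finType) (W : {set N}) (star tail : rel N) (t' : nat)
    (G : rel (N * nat)) (A B C E : {set N}) :
  proper_pair W star tail t' G ->
  B \subset (~: W) ->
  [disjoint A & B] -> [disjoint A & C] -> [disjoint B & C] ->
  tail_ancestral W tail E ->
  (forall k, tde tail B k -> k \notin E) ->
  E \subset C ->
  (forall k, tpa tail B k -> k \in E) ->
  deltasep star (mem A) (mem B) (mem C) ->
  forall t, 0 < t <= t' ->
    dsep G (nubar W t' A t.-1) (nu B t)
      [predU nubar W t' (B :|: C) t.-1 & nu E t].
Proof.
move=> [[tls hW] [[hdag hacyc] hcase]] hBW hAB hAC hBC hTA htde hEC htpa hds t /andP[t0 tt'].
have HG : forall x y, G x y -> [/\ valid W t' x, valid W t' y &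
   (x.2 < y.2 /\ star x.1 y.1) \/ (x.2 = y.2 /\ tail x.1 y.1)].
  case=> i s [j u] e /=.
  case: hcase => [[_ [hstar htail]] | heq].
    have /and3P[vx vy /= le] := hdag _ _ e.
    split => //; case: (ltngtP s u) => h.
    - by left; split => //; apply/(hstar i j).2; exists s, u; rewrite (ltnW h).
    - by rewrite leqNgt h in le.
    - by right; split => //; apply/(htail i j).2; exists s; rewrite -h in e.
  move: e; rewrite heq /unrolled => /and3P[vx vy /orP[/andP[h1 h2]|/andP[/eqP h1 h2]]].
    by split => //; left.
  by split => //; right.
have fin : forall m f d, iwalk G m f d -> f 0 \in nubar W t' A t.-1 -> f m \in nu B t ->
    iconn (Pc G [predU nubar W t' (B :|: C) t.-1 & nu E t])
          (Pn [predU nubar W t' (B :|: C) t.-1 & nu E t]) m f d -> False.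
  move=> m f d hw h0 hm hc.
  have [m1 [f1 [d1 [hw1 h01 hm1 hc1]]]] :=
    MP HG tls hAB hTA htde hEC htpa t0 tt' hw h0 hm hc.
  have [m2 [f2 [d2 [hw2 h02 hm2 hc2]]]] := trunc hw1 hm1 hc1.
  apply: (no_conn_walk (gpath := [rel i j | star i j && (i \notin mem B)]) (gan := star)
            (A := mem A) (B := mem B) (C := mem C) _ hds hw2 _ hm2 hc2).
    by move=> x y /andP[].
  by rewrite h02.
move=> x s hp hend; apply: NNPP => nb.
have hc := (blocked_iconn _ _ _ _).1 nb.
have hw := (walkP G x s x true).1 (proj1 (andP hp)).
case: hend => [[hx hl]|[hx hl]].
  apply: (fin _ _ _ hw hx _ hc).
  by rewrite -wlastE.
have hw' := iwalk_rev hw.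
have hc' := iconn_rev hc.
apply: (fin _ _ _ hw' _ _ hc').
  by rewrite subn0 -wlastE.
by rewrite subnn.
Qed.
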